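(* Let $\mathcal{W}$ be a finite set and $(X_t)_{t\ge1}$ a time-homogeneous first-order Markov chain on $\mathcal{W}$ with initial distribution $p_{x_1}$ and transition probabilities $q_x(x_{t+1}\mid x_t)$. For any history-dependent release policy $\boldsymbol q_h\in\mathcal{Q}_H$ there exists a policy $\boldsymbol q_s\in\mathcal{Q}_S$ such that, for every $n\ge1$, $$\sum_{t=1}^n I^{\boldsymbol q_h}(X_t,X_{t-1};Y_t\mid Y^{t-1})=\sum_{t=1}^n I^{\boldsymbol q_s}(X_t,X_{t-1};Y_t\mid Y^{t-1}).$$
   Context: Notation: $X^t=(X_1,\dots,X_t)$, $Y^{t-1}=(Y_1,\dots,Y_{t-1})$, $Y^0$ empty; at $t=1$ terms involving $X_0$ are absent. A history-dependent release policy is a sequence $\boldsymbol q=\{q_t(y_t\mid x^t,y^{t-1})\}_{t\ge1}$ of conditional probability distributions on $\mathcal{W}$; $\mathcal{Q}_H$ is the set of all such policies. The released locations $Y_t\in\mathcal W$ and true locations have joint law $$P^{\boldsymbol q}(X^n=x^n,Y^n=y^n)=p_{x_1}(x_1)q_1(y_1\mid x_1)\prod_{t=2}^n q_x(x_t\mid x_{t-1})\,q_t(y_t\mid x^t,y^{t-1}),$$ and $I^{\boldsymbol q}$ denotes mutual information under this law. $\mathcal{Q}_S\subseteq\mathcal{Q}_H$ is the set of policies of the form $q_t(y_t\mid x_t,x_{t-1},y^{t-1})$, depending on the true trajectory only through $(x_t,x_{t-1})$. *)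

(* Defs.v *)
From HB Require Import structures.
From mathcomp Require Import all_boot all_order all_algebra.
From mathcomp Require Import all_classical all_reals all_analysis.
Set Implicit Arguments. Unset Strict Implicit. Unset Printing Implicit Defensive.
Import Order.TTheory GRing.Theory Num.Theory.
Local Open Scope ring_scope.

Section Privacy.
Variables (W : finType) (R : realType).

Definition is_dist (p : W -> R) := (forall w, 0 <= p w) /\ \sum_(w : W) p w = 1.

(* Transition kernel: qx a b = q_x(x_{t+1} = b | x_t = a). *)
Definition is_stochastic (qx : W -> W -> R) := forall a, is_dist (qx a).

(* A history-dependent release policy.  With 0-based time t (paper time t+1),
   q t xs ys y = q_{t+1}(y | x^{t+1} = xs, y^{t} = ys); only arguments with
   size xs = t+1 and size ys = t are meaningful. *)
Definition policy := nat -> seq W -> seq W -> W -> R.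

Definition in_QH (q : policy) :=
  forall t (xs ys : seq W), size xs = t.+1 -> size ys = t -> is_dist (q t xs ys).

(* Q_S: q_t depends on the true trajectory only through (x_t, x_{t-1})
   (only x_1 at the first step). *)
Definition in_QS (q : policy) :=
  in_QH q /\
  forall t (xs xs' ys : seq W) (y : W), size xs = t.+1 -> size xs' = t.+1 ->
    drop t.-1 xs = drop t.-1 xs' -> q t xs ys y = q t xs' ys y.

Variables (p1 : W -> R) (qx : W -> W -> R).

Definition joint (q : policy) (n : nat) (xs ys : n.-tuple W) : R :=
  \prod_(i < n)
    ((if val i == 0%N then p1 (tnth xs i)
      else qx (nth (tnth xs i) xs i.-1) (tnth xs i)) *
     q i (take i.+1 xs) (take i ys) (tnth ys i)).

(* (X_t, X_{t-1}) (just X_1 when t = 1), t 1-based. *)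
Definition keyx (t : nat) (xs : seq W) : seq W := drop (t - 2) (take t xs).

(* Marginals under P^q on horizon n, at time t (1-based, 1 <= t <= n). *)
Definition P_ABC q n t (a c : seq W) : R :=
  \sum_(xs : n.-tuple W) \sum_(ys : n.-tuple W |
      (keyx t xs == a) && (take t ys == c)) joint q xs ys.
Definition P_AC q n t (a c : seq W) : R :=
  \sum_(xs : n.-tuple W) \sum_(ys : n.-tuple W |
      (keyx t xs == a) && (take t.-1 ys == take t.-1 c)) joint q xs ys.
Definition P_BC q n t (c : seq W) : R :=
  \sum_(xs : n.-tuple W) \sum_(ys : n.-tuple W | take t ys == c) joint q xs ys.
Definition P_C q n t (c : seq W) : R :=
  \sum_(xs : n.-tuple W) \sum_(ys : n.-tuple W |
      take t.-1 ys == take t.-1 c) joint q xs ys.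

(* I^q(X_t, X_{t-1}; Y_t | Y^{t-1}) computed from P^q on X^n, Y^n, as the
   expectation of log [P(A,B,C) P(C) / (P(A,C) P(B,C))]
   with A = (X_t,X_{t-1}), B = Y_t, C = Y^{t-1} (natural log; terms with
   zero probability contribute 0). *)
Definition cond_MI (q : policy) (n t : nat) : R :=
  \sum_(xs : n.-tuple W) \sum_(ys : n.-tuple W)
    joint q xs ys *
    ln (P_ABC q n t (keyx t xs) (take t ys) * P_C q n t (take t ys)
        / (P_AC q n t (keyx t xs) (take t ys) * P_BC q n t (take t ys))).

Definition sum_MI (q : policy) (n : nat) : R :=
  \sum_(1 <= t < n.+1) cond_MI q n t.

End Privacy.

(* Main.v *)
Require Import Defs.
From HB Require Import structures.
From mathcomp Require Import all_boot all_order all_algebra.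
From mathcomp Require Import all_classical all_reals all_analysis.
From mathcomp Require Import ring.
Set Implicit Arguments. Unset Strict Implicit. Unset Printing Implicit Defensive.
Import Order.TTheory GRing.Theory Num.Theory.
Local Open Scope ring_scope.

Section Tup.
Variables (W : finType) (R : numDomainType).

Lemma sum_tuple_cons n (F : seq W -> R) :
  \sum_(t : n.+1.-tuple W) F t = \sum_(x : W) \sum_(t : n.-tuple W) F (x :: t).
Proof.
rewrite pair_big /=.
rewrite (reindex (fun p : W * n.-tuple W => [tuple of p.1 :: p.2])) //=.
exists (fun t : n.+1.-tuple W => (thead t, [tuple of behead t])).
  by case=> x t _ /=; congr pair; apply: val_inj.
by move=> t _; apply: val_inj => /=; rewrite [in RHS](tuple_eta t).
Qed.

Lemma sum_tuple0 (F : seq W -> R) : \sum_(t : 0.-tuple W) F t = F [::].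
Proof.
rewrite (eq_bigr (fun _ => F [::])); last by move=> t _; rewrite tuple0.
by rewrite sumr_const card_tuple expn0.
Qed.

Lemma sum_tuple_rcons n (F : seq W -> R) :
  \sum_(t : n.+1.-tuple W) F t = \sum_(t : n.-tuple W) \sum_(x : W) F (rcons t x).
Proof.
elim: n F => [|n IH] F.
  rewrite sum_tuple_cons (sum_tuple0 (fun s => \sum_x F (rcons s x))).
  by apply: eq_bigr => x _; rewrite (sum_tuple0 (fun s => F (x :: s))).
rewrite sum_tuple_cons (sum_tuple_cons n (fun s => \sum_x F (rcons s x))).
by apply: eq_bigr => x _; rewrite (IH (fun s => F (x :: s))).
Qed.

Definition EE t (H : seq W -> seq W -> R) :=
  \sum_(xs : t.-tuple W) \sum_(ys : t.-tuple W) H xs ys.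

Lemma EE_rcons t H : EE t.+1 H =
  EE t (fun xs ys => \sum_x \sum_y H (rcons xs x) (rcons ys y)).
Proof.
rewrite /EE (sum_tuple_rcons _ (fun s => \sum_(ys : t.+1.-tuple W) H s ys)).
apply: eq_bigr => xs _; rewrite [RHS]exchange_big /=.
apply: eq_bigr => x _.
by rewrite (sum_tuple_rcons _ (fun s => H (rcons xs x) s)).
Qed.

Lemma EE_ext t H H' :
  (forall xs ys, size xs = t -> size ys = t -> H xs ys = H' xs ys) ->
  EE t H = EE t H'.
Proof.
move=> e; apply: eq_bigr => xs _; apply: eq_bigr => ys _.
by apply: e; rewrite size_tuple.
Qed.
End Tup.

Lemma nth_rcons_lt (T : Type) (x0 : T) s x i :
  (i < size s)%N -> nth x0 (rcons s x) i = nth x0 s i.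
Proof. by move=> h; rewrite nth_rcons h. Qed.

Lemma take_rcons_le (T : Type) (s : seq T) x i :
  (i <= size s)%N -> take i (rcons s x) = take i s.
Proof. by move=> h; rewrite -cats1 takel_cat. Qed.

Lemma drop_last1 (T : Type) (x0 : T) s t :
  size s = t.+1 -> drop t s = [:: last x0 s].
Proof.
elim: s t => // a s IH [|t] /=.
  by case: s {IH}.
case=> hs; rewrite IH //; case: s hs {IH} => //.
Qed.

Lemma last_drop (T : Type) (x0 : T) s k :
  (k < size s)%N -> last x0 (drop k s) = last x0 s.
Proof.
move=> h; rewrite -{2}(cat_take_drop k s) last_cat.
case E: (drop k s) => [|y s'] //.
by move: (size_drop k s); rewrite E /= => /eqP; rewrite eq_sym subn_eq0 leqNgt h.
Qed.

Section Main.
Variables (W : finType) (R : realType) (p1 : W -> R) (qx : W -> W -> R) (x0 : W).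
Hypotheses (hp1 : is_dist p1) (hqx : is_stochastic qx).

Definition trans (i : nat) (xs : seq W) :=
  if i == 0%N then p1 (nth x0 xs 0) else qx (nth x0 xs i.-1) (nth x0 xs i).
Definition step (q : policy W R) i xs ys :=
  trans i xs * q i (take i.+1 xs) (take i ys) (nth x0 ys i).
Definition Jl q n xs ys := \prod_(i < n) step q i xs ys.
Definition TT (n : nat) (xs : seq W) (x : W) :=
  if n == 0%N then p1 x else qx (last x0 xs) x.

Lemma joint_Jl q n (xs ys : n.-tuple W) : joint p1 qx q xs ys = Jl q n xs ys.
Proof.
apply: eq_bigr => i _; rewrite /step /trans !(tnth_nth x0).
congr (_ * _); case: eqP => [->|_] //.
congr (qx _ _); apply: set_nth_default.
by rewrite size_tuple (leq_ltn_trans (leq_pred i) (ltn_ord i)).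
Qed.

Lemma Jl_rcons q n xs ys x y : size xs = n -> size ys = n ->
  Jl q n.+1 (rcons xs x) (rcons ys y) =
  Jl q n xs ys * (TT n xs x * q n (rcons xs x) ys y).
Proof.
move=> sx sy; rewrite /Jl big_ord_recr /=; congr (_ * _).
  apply: eq_bigr => i _; rewrite /step /trans.
  have hi : (i < n)%N := ltn_ord i.
  have hi' : (i.-1 < n)%N by rewrite (leq_ltn_trans (leq_pred i)).
  have h0 : (0 < n)%N by apply: leq_ltn_trans hi.
  rewrite !nth_rcons_lt ?sx ?sy //.
  rewrite !take_rcons_le ?sx ?sy //; exact: ltnW.
have nx : nth x0 (rcons xs x) n = x by rewrite nth_rcons sx ltnn eqxx.
have ny : nth x0 (rcons ys y) n = y by rewrite nth_rcons sy ltnn eqxx.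
rewrite /step /trans /TT nx ny.
have tx : take n.+1 (rcons xs x) = rcons xs x by rewrite take_oversize // size_rcons sx.
have ty : take n (rcons ys y) = ys by rewrite take_rcons_le ?sy // -sy take_size.
rewrite tx ty.
case: eqP => [n0|/eqP nn0]; first by rewrite n0 nth_rcons sx n0 /=.
rewrite nth_rcons_lt ?sx; last by rewrite prednK // lt0n.
by rewrite -sx nth_last.
Qed.

Lemma Jl_ge0 q : in_QH q -> forall n xs ys, (n <= size xs)%N -> (n <= size ys)%N ->
  0 <= Jl q n xs ys.
Proof.
move=> hq n xs ys hx hy; apply: prodr_ge0 => i _.
have hi : (i < n)%N := ltn_ord i.
apply: mulr_ge0.
  by rewrite /trans; case: eqP => _; [apply: hp1.1 | apply: (hqx _).1].
apply: (hq i _ _ _ _).1.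
  by rewrite size_takel // (leq_trans hi hx).
by rewrite size_takel // (leq_trans (ltnW hi) hy).
Qed.

Lemma sumTT n xs : \sum_x TT n xs x = 1.
Proof. by rewrite /TT; case: eqP => _; [apply: hp1.2 | apply: (hqx _).2]. Qed.

Lemma marg1 q n (G : seq W -> seq W -> R) : in_QH q ->
  EE n.+1 (fun xs ys => Jl q n.+1 xs ys * G (take n xs) (take n ys)) =
  EE n (fun xs ys => Jl q n xs ys * G xs ys).
Proof.
move=> hq; rewrite EE_rcons; apply: EE_ext => xs ys sx sy.
transitivity (\sum_x \sum_y Jl q n xs ys * G xs ys * (TT n xs x * q n (rcons xs x) ys y)).
  apply: eq_bigr => x _; apply: eq_bigr => y _.
  have tx : take n (rcons xs x) = xs by rewrite take_rcons_le ?sx // -sx take_size.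
  have ty : take n (rcons ys y) = ys by rewrite take_rcons_le ?sy // -sy take_size.
  rewrite Jl_rcons // tx ty.
  ring.
under eq_bigr do rewrite -mulr_sumr.
rewrite -mulr_sumr -[RHS]mulr1; congr (_ * _).
under eq_bigr do rewrite -mulr_sumr (hq n _ _ _ _).2 ?size_rcons ?sx // mulr1.
exact: sumTT.
Qed.

Lemma marg q (G : seq W -> seq W -> R) t k : in_QH q ->
  EE (t + k) (fun xs ys => Jl q (t + k) xs ys * G (take t xs) (take t ys)) =
  EE t (fun xs ys => Jl q t xs ys * G xs ys).
Proof.
move=> hq; elim: k => [|k IH].
  rewrite addn0; apply: EE_ext => xs ys sx sy.
  by rewrite !take_oversize ?sx ?sy.
rewrite addnS -IH -(@marg1 q (t + k) (fun a b => G (take t a) (take t b)) hq).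
apply: EE_ext => xs ys _ _.
by rewrite !take_takel // leq_addr.
Qed.

Lemma stepE q t (g : seq W -> seq W -> R) :
  EE t.+1 (fun xs ys => Jl q t.+1 xs ys * g xs ys) =
  EE t (fun xs ys => Jl q t xs ys *
     \sum_x \sum_y (TT t xs x * q t (rcons xs x) ys y) * g (rcons xs x) (rcons ys y)).
Proof.
rewrite EE_rcons; apply: EE_ext => xs ys sx sy.
rewrite mulr_sumr; apply: eq_bigr => x _; rewrite mulr_sumr; apply: eq_bigr => y _.
by rewrite Jl_rcons // -!mulrA.
Qed.


Variables (qh : policy W R).
Hypothesis hqh : in_QH qh.

Definition Lsum t a ys := \sum_(xs : t.-tuple W | last x0 xs == a) Jl qh t xs ys.
Definition Nsum t a b ys y :=
  \sum_(xs : t.-tuple W | last x0 xs == a) Jl qh t xs ys * qh t (rcons xs b) ys y.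
Definition Fq t (k ys : seq W) (y : W) : R :=
  if Lsum t (head x0 k) ys == 0 then qh t (rcons (nseq t (head x0 k)) (last x0 k)) ys y
  else Nsum t (head x0 k) (last x0 k) ys y / Lsum t (head x0 k) ys.
Definition qs : policy W R := fun t xs ys y =>
  if t == 0%N then qh 0 xs ys y else Fq t (drop t.-1 xs) ys y.

Lemma qh_ge0 t xs ys y : size xs = t.+1 -> size ys = t -> 0 <= qh t xs ys y.
Proof. by move=> sx sy; apply: (hqh sx sy).1. Qed.
Lemma qh_sum t xs ys : size xs = t.+1 -> size ys = t -> \sum_y qh t xs ys y = 1.
Proof. by move=> sx sy; apply: (hqh sx sy).2. Qed.

Lemma LF t a b ys y : size ys = t -> Lsum t a ys * Fq t [:: a; b] ys y = Nsum t a b ys y.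
Proof.
move=> sy; rewrite /Fq /=; case: eqP => [L0|/eqP Lne].
  rewrite L0 mul0r; symmetry; apply: big1 => xs /eqP la.
  have -> : Jl qh t xs ys = 0; last by rewrite mul0r.
  apply: (psumr_eq0P _ L0); last by rewrite la.
  by move=> i _; apply: Jl_ge0 => //; rewrite ?size_tuple ?sy.
by rewrite mulrC divfK.
Qed.

Lemma qs_QS : in_QS qs.
Proof.
split.
  move=> [|t] xs ys sx sy; first exact: hqh.
  rewrite /qs /=.
  rewrite /Fq; set a := head x0 _; set b := last x0 _.
  case: eqP => [L0|/eqP Lne].
    by apply: hqh; rewrite // size_rcons size_nseq.
  have Lge : 0 <= Lsum t.+1 a ys.
    by apply: sumr_ge0 => i _; apply: Jl_ge0 => //; rewrite ?size_tuple ?sy.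
  split.
    move=> y; apply: divr_ge0 => //; apply: sumr_ge0 => i _; apply: mulr_ge0.
      by apply: Jl_ge0 => //; rewrite ?size_tuple ?sy.
    by apply: qh_ge0; rewrite // size_rcons size_tuple.
  rewrite -mulr_suml /Nsum exchange_big /=.
  rewrite (eq_bigr (fun i : t.+1.-tuple W => Jl qh t.+1 i ys)) ?divff //.
  move=> i _; rewrite -mulr_sumr qh_sum ?mulr1 //.
  by rewrite size_rcons size_tuple.
move=> t xs xs' ys y sx sx' hd; rewrite /qs.
case: eqP => [t0|_]; last by rewrite hd.
by move: hd; rewrite t0 !drop0 => ->.
Qed.


Lemma keyx_rcons t xs x : size xs = t.+1 -> keyx t.+2 (rcons xs x) = [:: last x0 xs; x].
Proof.
move=> sx; rewrite /keyx subSS subSS subn0 take_oversize ?size_rcons ?sx //.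
by rewrite drop_rcons ?sx // (drop_last1 x0 sx).
Qed.

Lemma last_keyx t xs : size xs = t.+1 -> last x0 (keyx t.+1 xs) = last x0 xs.
Proof.
move=> sx; rewrite /keyx take_oversize ?sx // last_drop // sx.
by rewrite ltn_subrL.
Qed.

Lemma qs_rcons t xs x ys y : size xs = t.+1 ->
  qs t.+1 (rcons xs x) ys y = Fq t.+1 [:: last x0 xs; x] ys y.
Proof. by move=> sx; rewrite /qs /= drop_rcons ?sx // (drop_last1 x0 sx). Qed.

Lemma Claim t g :
  EE t.+1 (fun xs ys => Jl qh t.+1 xs ys * g (keyx t.+1 xs) ys) =
  EE t.+1 (fun xs ys => Jl qs t.+1 xs ys * g (keyx t.+1 xs) ys).
Proof.
elim: t g => [|t IH] g.
  by apply: EE_ext => xs ys _ _; rewrite /Jl !big_ord1 /step /qs /=.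
rewrite [LHS]stepE [RHS]stepE.
pose Psi (a : W) (ys : seq W) := \sum_x \sum_y
  (qx a x * Fq t.+1 [:: a; x] ys y) * g [:: a; x] (rcons ys y).
transitivity (EE t.+1 (fun xs ys => Jl qh t.+1 xs ys * Psi (last x0 (keyx t.+1 xs)) ys)); last first.
  rewrite (IH (fun k ys => Psi (last x0 k) ys)).
  apply: EE_ext => xs ys sx sy; rewrite last_keyx //; congr (_ * _).
  apply: eq_bigr => x _; apply: eq_bigr => y _.
  by rewrite /TT /= keyx_rcons // qs_rcons.
have E1 : EE t.+1 (fun xs ys => Jl qh t.+1 xs ys * \sum_x \sum_y
     (TT t.+1 xs x * qh t.+1 (rcons xs x) ys y) * g (keyx t.+2 (rcons xs x)) (rcons ys y)) =
  EE t.+1 (fun xs ys => Jl qh t.+1 xs ys * \sum_x \sum_y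
     (qx (last x0 xs) x * qh t.+1 (rcons xs x) ys y) * g [:: last x0 xs; x] (rcons ys y)).
  apply: EE_ext => xs ys sx sy; congr (_ * _).
  apply: eq_bigr => x _; apply: eq_bigr => y _.
  by rewrite /TT /= keyx_rcons.
have E2 : EE t.+1 (fun xs ys => Jl qh t.+1 xs ys * Psi (last x0 (keyx t.+1 xs)) ys) =
  EE t.+1 (fun xs ys => Jl qh t.+1 xs ys * Psi (last x0 xs) ys).
  by apply: EE_ext => xs ys sx sy; rewrite last_keyx.
rewrite E1 E2 /EE exchange_big [RHS]exchange_big; apply: eq_bigr => ys _.
rewrite !(partition_big (fun xs : t.+1.-tuple W => last x0 xs) predT) //=.
apply: eq_bigr => a _.
have sy : size ys = t.+1 by rewrite size_tuple.
transitivity (\sum_x \sum_y qx a x * Nsum t.+1 a x ys y * g [:: a; x] (rcons ys y)).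
  rewrite (eq_bigr (fun xs : t.+1.-tuple W => \sum_x \sum_y Jl qh t.+1 xs ys * qh t.+1 (rcons xs x) ys y
      * (qx a x * g [:: a; x] (rcons ys y)))); last first.
    move=> xs /eqP la; rewrite la mulr_sumr; apply: eq_bigr => x _.
    rewrite mulr_sumr; apply: eq_bigr => y _; ring.
  rewrite exchange_big; apply: eq_bigr => x _; rewrite exchange_big; apply: eq_bigr => y _ /=.
  rewrite /Nsum -mulr_suml; ring.
rewrite (eq_bigr (fun xs : t.+1.-tuple W => Jl qh t.+1 xs ys * Psi a ys)); last by move=> xs /eqP ->.
rewrite -mulr_suml -/(Lsum t.+1 a ys) /Psi mulr_sumr; apply: eq_bigr => x _.
rewrite mulr_sumr; apply: eq_bigr => y _.
rewrite -(LF a x y sy); ring.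
Qed.


Lemma red q n t (f : seq W -> seq W -> R) : in_QH q -> (t <= n)%N ->
  \sum_(xs : n.-tuple W) \sum_(ys : n.-tuple W)
     joint p1 qx q xs ys * f (keyx t xs) (take t ys) =
  EE t (fun xs ys => Jl q t xs ys * f (keyx t xs) ys).
Proof.
move=> hq tn; have [k ek] : exists k, n = (t + k)%N by exists (n - t)%N; rewrite subnKC.
subst n; rewrite -(@marg q (fun a c => f (keyx t a) c) t k hq).
apply: eq_bigr => xs _; apply: eq_bigr => ys _.
by rewrite joint_Jl /keyx take_takel.
Qed.

Lemma red_eq n t (f : seq W -> seq W -> R) : (0 < t)%N -> (t <= n)%N ->
  \sum_(xs : n.-tuple W) \sum_(ys : n.-tuple W)
     joint p1 qx qh xs ys * f (keyx t xs) (take t ys) =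
  \sum_(xs : n.-tuple W) \sum_(ys : n.-tuple W)
     joint p1 qx qs xs ys * f (keyx t xs) (take t ys).
Proof.
move=> t0 tn; rewrite (red _ hqh tn) (red _ qs_QS.1 tn).
by case: t t0 {tn} => // t _; apply: Claim.
Qed.

Lemma mkcond q n (P : seq W -> seq W -> bool) :
  \sum_(xs : n.-tuple W) \sum_(ys : n.-tuple W | P xs ys) joint p1 qx q xs ys =
  \sum_(xs : n.-tuple W) \sum_(ys : n.-tuple W) joint p1 qx q xs ys * (P xs ys)%:R.
Proof.
apply: eq_bigr => xs _; rewrite big_mkcond; apply: eq_bigr => ys _.
by case: (P xs ys); rewrite ?mulr1 ?mulr0.
Qed.

Lemma cond_eq n t : (0 < t)%N -> (t <= n)%N ->
  cond_MI p1 qx qh n t = cond_MI p1 qx qs n t.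
Proof.
move=> t0 tn.
have PABC k c : P_ABC p1 qx qh n t k c = P_ABC p1 qx qs n t k c.
  rewrite /P_ABC !(mkcond _ _ (fun xs ys => (keyx t xs == k) && (take t ys == c))).
  exact: (red_eq (fun k' c' => ((k' == k) && (c' == c))%:R) t0 tn).
have PBC c : P_BC p1 qx qh n t c = P_BC p1 qx qs n t c.
  rewrite /P_BC !(mkcond _ _ (fun xs ys => (take t ys == c))).
  exact: (red_eq (fun k' c' => (c' == c)%:R) t0 tn).
have tt1 (ys : seq W) : take t.-1 ys = take t.-1 (take t ys).
  by rewrite take_takel // leq_pred.
have PAC k c : P_AC p1 qx qh n t k c = P_AC p1 qx qs n t k c.
  rewrite /P_AC !(mkcond _ _ (fun xs ys => (keyx t xs == k) && (take t.-1 ys == take t.-1 c))).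
  have conv q : \sum_(xs : n.-tuple W) \sum_(ys : n.-tuple W) joint p1 qx q xs ys *
        ((keyx t xs == k) && (take t.-1 ys == take t.-1 c))%:R =
      \sum_(xs : n.-tuple W) \sum_(ys : n.-tuple W) joint p1 qx q xs ys *
        (fun k' c' => ((k' == k) && (take t.-1 c' == take t.-1 c))%:R) (keyx t xs) (take t ys).
    by apply: eq_bigr => xs _; apply: eq_bigr => ys _ /=; rewrite -tt1.
  by rewrite !conv; exact: (red_eq (fun k' c' => ((k' == k) && (take t.-1 c' == take t.-1 c))%:R) t0 tn).
have PC c : P_C p1 qx qh n t c = P_C p1 qx qs n t c.
  rewrite /P_C !(mkcond _ _ (fun xs ys => (take t.-1 ys == take t.-1 c))).
  have conv q : \sum_(xs : n.-tuple W) \sum_(ys : n.-tuple W) joint p1 qx q xs ys *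
        (take t.-1 ys == take t.-1 c)%:R =
      \sum_(xs : n.-tuple W) \sum_(ys : n.-tuple W) joint p1 qx q xs ys *
        (fun k' c' => (take t.-1 c' == take t.-1 c)%:R) (keyx t xs) (take t ys).
    by apply: eq_bigr => xs _; apply: eq_bigr => ys _ /=; rewrite -tt1.
  by rewrite !conv; exact: (red_eq (fun k' c' => (take t.-1 c' == take t.-1 c)%:R) t0 tn).
rewrite /cond_MI.
transitivity (\sum_(xs : n.-tuple W) \sum_(ys : n.-tuple W) joint p1 qx qh xs ys *
  (fun k c => ln (P_ABC p1 qx qs n t k c * P_C p1 qx qs n t c /
     (P_AC p1 qx qs n t k c * P_BC p1 qx qs n t c))) (keyx t xs) (take t ys)).
  by apply: eq_bigr => xs _; apply: eq_bigr => ys _ /=; rewrite PABC PBC PAC PC.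
exact: (red_eq (fun k c => ln (P_ABC p1 qx qs n t k c * P_C p1 qx qs n t c /
     (P_AC p1 qx qs n t k c * P_BC p1 qx qs n t c))) t0 tn).
Qed.

Lemma sum_eq n : sum_MI p1 qx qh n = sum_MI p1 qx qs n.
Proof.
apply: eq_big_nat => t /andP[t0 tn]; apply: cond_eq => //.
Qed.

End Main.

Theorem lemma2 (W : finType) (R : realType) (p1 : W -> R) (qx : W -> W -> R)
  (hp1 : is_dist p1) (hqx : is_stochastic qx)
  (qh : policy W R) (hqh : in_QH qh) :
  exists qs : policy W R, in_QS qs /\
    forall n : nat, (1 <= n)%N ->
      sum_MI p1 qx qh n = sum_MI p1 qx qs n.
Proof.
case: (pickP (fun _ : W => true)) => [x0 _ | hW].
  exists (qs p1 qx x0 qh); split; first exact: qs_QS.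
  by move=> n _; apply: sum_eq.
exists qh; split => //; split => // t [|x xs] xs' ys y //.
by move: (hW x).
Qed.
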